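(* For every $\vec n\in\mathbb{R}^9$ with $\sum_i n(i)=0$ and $\sum_i n(i)^2=1$, $$-\frac1{\sqrt2}\le F(\vec n)\le\frac1{\sqrt2}.$$ Moreover, writing the trace-one Hermitian operator $\rho=\sum_i[4p(i)-\frac13]\Pi_i$ with $p(i)=\frac19+r\,n(i)$, $r>0$, in terms of its eigenvalues $\alpha,\beta,1-\alpha-\beta$, one has $F(\vec n)=\dfrac{\sqrt3\left(\frac29-f_1+f_2\right)}{\left(f_1-\frac13\right)^{3/2}}$ with $f_1=\alpha^2+\beta^2+(1-\alpha-\beta)^2$, $f_2=\alpha^3+\beta^3+(1-\alpha-\beta)^3$; the upper bound is attained exactly when two eigenvalues are equal and less than $\frac13$, and the lower bound exactly when two eigenvalues are equal and greater than $\frac13$.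
   Context: Let $\omega=e^{2\pi i/3}$, standard basis $|0\rangle,|1\rangle,|2\rangle$ of $\mathbb{C}^3$, $X|j\rangle=|j+1\bmod 3\rangle$, $Z|j\rangle=\omega^j|j\rangle$, $|\psi_0\rangle=\frac1{\sqrt2}(0,1,-1)^T$; for $m,n\in\{0,1,2\}$ and $i=3m+n+1$, $\Pi_i$ is the projector onto $X^mZ^n|\psi_0\rangle$ (the canonical Hesse SIC). Identify index $i=3m+n+1$ with $(m,n)\in\mathbb{Z}_3^2$; the 12 affine lines are $\{1,2,3\},\{4,5,6\},\{7,8,9\},\{1,4,7\},\{2,5,8\},\{3,6,9\},\{1,5,9\},\{2,6,7\},\{3,4,8\},\{1,6,8\},\{2,4,9\},\{3,5,7\}$, and $Q$ is the set of ordered triples $(i,j,k)$ of pairwise distinct indices with $\{i,j,k\}$ a line. For $v\in\mathbb{R}^9$ define $F(v)=\sum_i v(i)^3-\frac12\sum_{(i,j,k)\in Q}v(i)v(j)v(k)$. *)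

(* Defs.v *)
(* Complex numbers: an arbitrary numClosedFieldType C
   (e.g. the complex numbers); reals are the elements x with x \is Num.real. *)
From HB Require Import structures.
From mathcomp Require Import all_boot all_order all_algebra.
Set Implicit Arguments. Unset Strict Implicit. Unset Printing Implicit Defensive.
Import Order.TTheory GRing.Theory Num.Theory.
Local Open Scope ring_scope.

Section Hesse.
Variable C : numClosedFieldType.

(* omega = e^{2 pi i/3} = -1/2 + i sqrt(3)/2 *)
Definition omega : C := (-1 + 'i * sqrtC 3) / 2.

Definition Xop : 'M[C]_3 :=
  \matrix_(k < 3, j < 3) (if (k : nat) == ((j + 1) %% 3)%N then 1 else 0).
Definition Zop : 'M[C]_3 :=
  \matrix_(k < 3, j < 3) (if k == j then omega ^+ j else 0).

Definition psi0 : 'cV[C]_3 :=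
  \col_(k < 3) ((if (k : nat) == 1%N then 1 else if (k : nat) == 2%N then -1 else 0)
                 / sqrtC 2).

(* index i = 3m+n (0-based, i.e. the paper's 3m+n+1 minus one) *)
Definition sic_vec (i : 'I_9) : 'cV[C]_3 :=
  (Xop ^+ (i %/ 3)%N) *m (Zop ^+ (i %% 3)%N) *m psi0.

Definition Pi (i : 'I_9) : 'M[C]_3 :=
  sic_vec i *m (map_mx Num.conj (sic_vec i))^T.

End Hesse.

(* The 12 affine lines, 0-based (paper index minus one). *)
Definition lines : seq {set 'I_9} :=
  [:: [set inord 0; inord 1; inord 2]; [set inord 3; inord 4; inord 5];
      [set inord 6; inord 7; inord 8]; [set inord 0; inord 3; inord 6];
      [set inord 1; inord 4; inord 7]; [set inord 2; inord 5; inord 8];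
      [set inord 0; inord 4; inord 8]; [set inord 1; inord 5; inord 6];
      [set inord 2; inord 3; inord 7]; [set inord 0; inord 5; inord 7];
      [set inord 1; inord 3; inord 8]; [set inord 2; inord 4; inord 6]].

Definition inQ (i j k : 'I_9) : bool :=
  [&& i != j, j != k, i != k & [set i; j; k] \in lines].

Definition Ffun (C : numClosedFieldType) (v : 'I_9 -> C) : C :=
  \sum_(i < 9) v i ^+ 3
  - 2^-1 * \sum_(i < 9) \sum_(j < 9) \sum_(k < 9)
              (if inQ i j k then v i * v j * v k else 0).

Definition pvec (C : numClosedFieldType) (r : C) (n : 'I_9 -> C) (i : 'I_9) : C :=
  9^-1 + r * n i.

Definition rho (C : numClosedFieldType) (r : C) (n : 'I_9 -> C) : 'M[C]_3 :=
  \sum_(i < 9) (4 * pvec r n i - 3^-1) *: Pi C i.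

Definition f1 (C : numClosedFieldType) (a b : C) : C :=
  a ^+ 2 + b ^+ 2 + (1 - a - b) ^+ 2.
Definition f2 (C : numClosedFieldType) (a b : C) : C :=
  a ^+ 3 + b ^+ 3 + (1 - a - b) ^+ 3.

Definition two_equal_with (C : numClosedFieldType) (P : C -> bool) (a b c : C) : Prop :=
  (a = b /\ P a) \/ (a = c /\ P a) \/ (b = c /\ P b).

(* Main.v *)
Require Import Defs.
From HB Require Import structures.
From mathcomp Require Import all_boot all_order all_algebra.
From mathcomp Require Import ring.
From Stdlib Require Import Lia.
From mathcomp Require Import zify.
Set Implicit Arguments. Unset Strict Implicit. Unset Printing Implicit Defensive.
Import Order.TTheory GRing.Theory Num.Theory.
Local Open Scope ring_scope.

Section S.
Variable C : numClosedFieldType.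
Local Notation w := (omega C).

Lemma omega_eq : w ^+ 2 + w + 1 = 0.
Proof.
rewrite /omega.
have h3 : sqrtC (3 : C) ^+ 2 = 3 by rewrite sqrtCK.
have hi : ('i : C) ^+ 2 = -1 by rewrite sqrCi.
have ee : ((-1 + 'i * sqrtC 3) / 2) ^+ 2 + (-1 + 'i * sqrtC 3) / 2 + 1
   = (('i:C) ^+2 * sqrtC 3 ^+ 2 + 3) / 4 :> C.
  by field.
by rewrite ee h3 hi; field.
Qed.

Lemma conj_omega : w^* = w ^+ 2.
Proof.
rewrite /omega fmorph_div rmorphD rmorphN rmorph1 rmorphM /= conjCi.
rewrite (CrealP (sqrtC_real _)) ?ler0n // conjC_nat.
have h3 : sqrtC (3 : C) ^+ 2 = 3 by rewrite sqrtCK.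
have hi : ('i : C) ^+ 2 = -1 by rewrite sqrCi.
apply/eqP; rewrite -subr_eq0; apply/eqP.
have -> : (-1 + - 'i * sqrtC 3) / 2 - ((-1 + 'i * sqrtC 3) / 2) ^+ 2 =
  (-3 - ('i:C)^+2 * sqrtC 3 ^+2)/4 :> C by field.
by rewrite h3 hi; field.
Qed.

Lemma wred (q x y : C) : x - y = (w ^+ 2 + w + 1) * q -> x = y.
Proof. by rewrite omega_eq mul0r => /eqP; rewrite subr_eq0 => /eqP. Qed.

Definition p0 : 'cV[C]_3 := \col_(k < 3) (if (k : nat) == 1%N then 1 else if (k : nat) == 2%N then -1 else 0).
Definition W (i : 'I_9) : 'cV[C]_3 := (Xop C ^+ (i %/ 3)%N) *m (Zop C ^+ (i %% 3)%N) *m p0.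
Definition nof (i : nat) : nat := match i with 0|3|6 => 0 | 1|4|7 => 1 | _ => 2 end%N.
Definition mof (i : nat) : nat := match i with 0|1|2 => 0 | 3|4|5 => 1 | _ => 2 end%N.
Definition Wv (x : C) (i k : nat) : C := let m := mof i in let nn := nof i in
  let j := nof (k + 3 - m)%N in
  if j == 1%N then x ^+ nn else if j == 2%N then - x ^+ (2 * nn) else 0.

Lemma WE (i : 'I_9) (k : 'I_3) : W i k 0 = Wv w i k.
Proof.
case: i => [[|[|[|[|[|[|[|[|[|//]]]]]]]]]] Hi; case: k => [[|[|[|//]]]] Hk;
rewrite /W /Wv /mof /nof /= ?expr0 ?expr1 ?expr2 -?mulmxE ?mul1mx /Xop /Zop /p0;
rewrite !mxE ?big_ord_recr ?big_ord0 /=.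
all: do ?(rewrite -?mulmxE !mxE ?big_ord_recr ?big_ord0 /=).
all: ring.
Qed.

Lemma conjWv (i k : nat) : (Wv w i k)^* = Wv (w ^+ 2) i k.
Proof.
rewrite /Wv; case: ifP => _; first by rewrite rmorphXn /= conj_omega.
case: ifP => _; last by rewrite conjC0.
by rewrite rmorphN rmorphXn /= conj_omega.
Qed.

Lemma psi0E : psi0 C = (sqrtC 2)^-1 *: p0.
Proof. by apply/matrixP => k l; rewrite !mxE mulrC. Qed.

Lemma sicE (i : 'I_9) : sic_vec C i = (sqrtC 2)^-1 *: W i.
Proof. by rewrite /sic_vec psi0E scalemxAr. Qed.

Lemma sic_entry (i : 'I_9) (k : 'I_3) : sic_vec C i k 0 = (sqrtC 2)^-1 * Wv w i k.
Proof. by rewrite sicE [LHS]mxE WE. Qed.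

Lemma PiE (i : 'I_9) (k l : 'I_3) : Pi C i k l = 2^-1 * Wv w i k * Wv (w ^+ 2) i l.
Proof.
rewrite /Pi mxE big_ord1 [X in _ * X]mxE [X in _ * X]mxE !sic_entry rmorphM /= conjWv.
have sr : (sqrtC (2:C))^-1 \is Num.real by rewrite realV sqrtC_real ?ler0n.
rewrite (CrealP sr).
have hs : (sqrtC (2:C))^-1 * (sqrtC 2)^-1 = 2^-1 by rewrite -invfM -expr2 sqrtCK.
by rewrite -hs; ring.
Qed.
Definition nv (n : 'I_9 -> C) (k : nat) : C := n (inord k).
Lemma nE (n : 'I_9 -> C) (i : 'I_9) : n i = nv n i.
Proof. by rewrite /nv inord_val. Qed.

Definition Rv (r w : C) (v : nat -> C) (k l : nat) : C :=
  match k, l with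
  | 0, 0 => (1 / 3) + 2*(v 8%N)*(r) + 2*(v 7%N)*(r) + 2*(v 6%N)*(r) + 2*(v 5%N)*(r) + 2*(v 4%N)*(r) + 2*(v 3%N)*(r)
  | 0, 1 => (-2)*(v 8%N)*(r)*(w) + 2*(v 7%N)*(r) + 2*(v 7%N)*(r)*(w) + (-2)*(v 6%N)*(r)
  | 0, 2 => 2*(v 5%N)*(r) + 2*(v 5%N)*(r)*(w) + (-2)*(v 4%N)*(r)*(w) + (-2)*(v 3%N)*(r)
  | 1, 0 => 2*(v 8%N)*(r) + 2*(v 8%N)*(r)*(w) + (-2)*(v 7%N)*(r)*(w) + (-2)*(v 6%N)*(r)
  | 1, 1 => (1 / 3) + 2*(v 8%N)*(r) + 2*(v 7%N)*(r) + 2*(v 6%N)*(r) + 2*(v 2%N)*(r) + 2*(v 1%N)*(r) + 2*(v 0%N)*(r)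
  | 1, 2 => (-2)*(v 2%N)*(r)*(w) + 2*(v 1%N)*(r) + 2*(v 1%N)*(r)*(w) + (-2)*(v 0%N)*(r)
  | 2, 0 => (-2)*(v 5%N)*(r)*(w) + 2*(v 4%N)*(r) + 2*(v 4%N)*(r)*(w) + (-2)*(v 3%N)*(r)
  | 2, 1 => 2*(v 2%N)*(r) + 2*(v 2%N)*(r)*(w) + (-2)*(v 1%N)*(r)*(w) + (-2)*(v 0%N)*(r)
  | 2, 2 => (1 / 3) + 2*(v 5%N)*(r) + 2*(v 4%N)*(r) + 2*(v 3%N)*(r) + 2*(v 2%N)*(r) + 2*(v 1%N)*(r) + 2*(v 0%N)*(r)
  | _, _ => 0
  end.

Lemma rhoE (r : C) (n : 'I_9 -> C) (k l : 'I_3) : rho r n k l = Rv r w (nv n) k l.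
Proof.
rewrite /rho summxE; under eq_bigr => i _ do rewrite mxE PiE.
rewrite !big_ord_recr big_ord0 /pvec !(nE n) /=.
case: k => [[|[|[|//]]]] Hk; case: l => [[|[|[|//]]]] Hl; rewrite /Wv /Rv /mof /nof /=.
- by apply: (wred (q := (-(2 / 9)) + (2 / 9)*(w) + (-(1 / 6))*(w)^+3 + (1 / 6)*(w)^+4 + (-(1 / 18))*(w)^+6 + (1 / 18)*(w)^+7 + (-(1 / 18))*(w)^+9 + (1 / 18)*(w)^+10 + (-2)*(nv n 8%N)*(r) + 2*(nv n 8%N)*(r)*(w) + (-2)*(nv n 8%N)*(r)*(w)^+3 + 2*(nv n 8%N)*(r)*(w)^+4 + (-2)*(nv n 7%N)*(r) + 2*(nv n 7%N)*(r)*(w) + (-2)*(nv n 5%N)*(r) + 2*(nv n 5%N)*(r)*(w) + (-2)*(nv n 5%N)*(r)*(w)^+3 + 2*(nv n 5%N)*(r)*(w)^+4 + (-2)*(nv n 5%N)*(r)*(w)^+6 + 2*(nv n 5%N)*(r)*(w)^+7 + (-2)*(nv n 5%N)*(r)*(w)^+9 + 2*(nv n 5%N)*(r)*(w)^+10 + (-2)*(nv n 4%N)*(r) + 2*(nv n 4%N)*(r)*(w) + (-2)*(nv n 4%N)*(r)*(w)^+3 + 2*(nv n 4%N)*(r)*(w)^+4)); field.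
- by apply: (wred (q := (-(1 / 18)) + (1 / 18)*(w) + (-(1 / 18))*(w)^+3 + (1 / 18)*(w)^+4 + (-(1 / 18))*(w)^+5 + (1 / 18)*(w)^+7 + (-(1 / 18))*(w)^+8 + 2*(nv n 8%N)*(r)*(w) + (-2)*(nv n 8%N)*(r)*(w)^+2 + 2*(nv n 8%N)*(r)*(w)^+4 + (-2)*(nv n 8%N)*(r)*(w)^+5 + 2*(nv n 8%N)*(r)*(w)^+7 + (-2)*(nv n 8%N)*(r)*(w)^+8 + (-2)*(nv n 7%N)*(r) + 2*(nv n 7%N)*(r)*(w)^+2 + (-2)*(nv n 7%N)*(r)*(w)^+3)); field.
- by apply: (wred (q := (-(1 / 18)) + (1 / 18)*(w) + (-(1 / 18))*(w)^+3 + (1 / 18)*(w)^+5 + (-(1 / 18))*(w)^+6 + (-2)*(nv n 5%N)*(r) + 2*(nv n 5%N)*(r)*(w)^+2 + (-2)*(nv n 5%N)*(r)*(w)^+3 + 2*(nv n 5%N)*(r)*(w)^+5 + (-2)*(nv n 5%N)*(r)*(w)^+6 + 2*(nv n 4%N)*(r)*(w) + (-2)*(nv n 4%N)*(r)*(w)^+2)); field.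
- by apply: (wred (q := (-(1 / 18)) + (1 / 18)*(w) + (-(1 / 18))*(w)^+3 + (1 / 18)*(w)^+5 + (-(1 / 18))*(w)^+6 + (-2)*(nv n 8%N)*(r) + 2*(nv n 8%N)*(r)*(w)^+2 + (-2)*(nv n 8%N)*(r)*(w)^+3 + 2*(nv n 8%N)*(r)*(w)^+5 + (-2)*(nv n 8%N)*(r)*(w)^+6 + 2*(nv n 7%N)*(r)*(w) + (-2)*(nv n 7%N)*(r)*(w)^+2)); field.
- by apply: (wred (q := (-(2 / 9)) + (2 / 9)*(w) + (-(1 / 6))*(w)^+3 + (1 / 6)*(w)^+4 + (-(1 / 18))*(w)^+6 + (1 / 18)*(w)^+7 + (-(1 / 18))*(w)^+9 + (1 / 18)*(w)^+10 + (-2)*(nv n 8%N)*(r) + 2*(nv n 8%N)*(r)*(w) + (-2)*(nv n 8%N)*(r)*(w)^+3 + 2*(nv n 8%N)*(r)*(w)^+4 + (-2)*(nv n 8%N)*(r)*(w)^+6 + 2*(nv n 8%N)*(r)*(w)^+7 + (-2)*(nv n 8%N)*(r)*(w)^+9 + 2*(nv n 8%N)*(r)*(w)^+10 + (-2)*(nv n 7%N)*(r) + 2*(nv n 7%N)*(r)*(w) + (-2)*(nv n 7%N)*(r)*(w)^+3 + 2*(nv n 7%N)*(r)*(w)^+4 + (-2)*(nv n 2%N)*(r) + 2*(nv n 2%N)*(r)*(w) + (-2)*(nv n 2%N)*(r)*(w)^+3 + 2*(nv n 2%N)*(r)*(w)^+4 + (-2)*(nv n 1%N)*(r) + 2*(nv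 n 1%N)*(r)*(w))); field.
- by apply: (wred (q := (-(1 / 18)) + (1 / 18)*(w) + (-(1 / 18))*(w)^+3 + (1 / 18)*(w)^+4 + (-(1 / 18))*(w)^+5 + (1 / 18)*(w)^+7 + (-(1 / 18))*(w)^+8 + 2*(nv n 2%N)*(r)*(w) + (-2)*(nv n 2%N)*(r)*(w)^+2 + 2*(nv n 2%N)*(r)*(w)^+4 + (-2)*(nv n 2%N)*(r)*(w)^+5 + 2*(nv n 2%N)*(r)*(w)^+7 + (-2)*(nv n 2%N)*(r)*(w)^+8 + (-2)*(nv n 1%N)*(r) + 2*(nv n 1%N)*(r)*(w)^+2 + (-2)*(nv n 1%N)*(r)*(w)^+3)); field.
- by apply: (wred (q := (-(1 / 18)) + (1 / 18)*(w) + (-(1 / 18))*(w)^+3 + (1 / 18)*(w)^+4 + (-(1 / 18))*(w)^+5 + (1 / 18)*(w)^+7 + (-(1 / 18))*(w)^+8 + 2*(nv n 5%N)*(r)*(w) + (-2)*(nv n 5%N)*(r)*(w)^+2 + 2*(nv n 5%N)*(r)*(w)^+4 + (-2)*(nv n 5%N)*(r)*(w)^+5 + 2*(nv n 5%N)*(r)*(w)^+7 + (-2)*(nv n 5%N)*(r)*(w)^+8 + (-2)*(nv n 4%N)*(r) + 2*(nv n 4%N)*(r)*(w)^+2 + (-2)*(nv n 4%N)*(r)*(w)^+3)); field.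
- by apply: (wred (q := (-(1 / 18)) + (1 / 18)*(w) + (-(1 / 18))*(w)^+3 + (1 / 18)*(w)^+5 + (-(1 / 18))*(w)^+6 + (-2)*(nv n 2%N)*(r) + 2*(nv n 2%N)*(r)*(w)^+2 + (-2)*(nv n 2%N)*(r)*(w)^+3 + 2*(nv n 2%N)*(r)*(w)^+5 + (-2)*(nv n 2%N)*(r)*(w)^+6 + 2*(nv n 1%N)*(r)*(w) + (-2)*(nv n 1%N)*(r)*(w)^+2)); field.
- by apply: (wred (q := (-(2 / 9)) + (2 / 9)*(w) + (-(1 / 6))*(w)^+3 + (1 / 6)*(w)^+4 + (-(1 / 18))*(w)^+6 + (1 / 18)*(w)^+7 + (-(1 / 18))*(w)^+9 + (1 / 18)*(w)^+10 + (-2)*(nv n 5%N)*(r) + 2*(nv n 5%N)*(r)*(w) + (-2)*(nv n 5%N)*(r)*(w)^+3 + 2*(nv n 5%N)*(r)*(w)^+4 + (-2)*(nv n 4%N)*(r) + 2*(nv n 4%N)*(r)*(w) + (-2)*(nv n 2%N)*(r) + 2*(nv n 2%N)*(r)*(w) + (-2)*(nv n 2%N)*(r)*(w)^+3 + 2*(nv n 2%N)*(r)*(w)^+4 + (-2)*(nv n 2%N)*(r)*(w)^+6 + 2*(nv n 2%N)*(r)*(w)^+7 + (-2)*(nv n 2%N)*(r)*(w)^+9 + 2*(nv n 2%N)*(r)*(w)^+10 + (-2)*(nv n 1%N)*(r) + 2*(nv n 1%N)*(r)*(w) + (-2)*(nv n 1%N)*(r)*(w)^+3 + 2*(nv n 1%N)*(r)*(w)^+4));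 field.
Qed.

End S.


Section S2.
Variable C : numClosedFieldType.
Local Notation w := (omega C).

Definition D3 (f : nat -> nat -> C) : C :=
  f 0%N 0%N * f 1%N 1%N * f 2%N 2%N + f 0%N 1%N * f 1%N 2%N * f 2%N 0%N
  + f 0%N 2%N * f 1%N 0%N * f 2%N 1%N - f 0%N 2%N * f 1%N 1%N * f 2%N 0%N
  - f 0%N 0%N * f 1%N 2%N * f 2%N 1%N - f 0%N 1%N * f 1%N 0%N * f 2%N 2%N.

Definition mf (M : 'M[C]_3) (k l : nat) : C := M (inord k) (inord l).
Lemma mfE (M : 'M[C]_3) (i j : 'I_3) : M i j = mf M i j.
Proof. by rewrite /mf !inord_val. Qed.

Definition mf2 (N : 'M[C]_2) (k l : nat) : C := N (inord k) (inord l).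
Lemma mf2E (N : 'M[C]_2) (i j : 'I_2) : N i j = mf2 N i j.
Proof. by rewrite /mf2 !inord_val. Qed.

Lemma det2 (N : 'M[C]_2) : \det N = mf2 N 0 0 * mf2 N 1 1 - mf2 N 0 1 * mf2 N 1 0.
Proof.
rewrite (expand_det_row _ ord0) !big_ord_recr big_ord0 /cofactor /=.
rewrite !det_mx11 !mxE !(mf2E N) /=.
ring.
Qed.

Lemma detE (M : 'M[C]_3) : \det M = D3 (mf M).
Proof.
rewrite (expand_det_row _ ord0) !big_ord_recr big_ord0 /cofactor /=.
rewrite !det2 /mf2 !mxE !(mfE M) /D3 /= /bump !inordK //=.
ring.
Qed.

Lemma char_hornerE (A : 'M[C]_3) t : (char_poly A).[t] = \det (t%:M - A).
Proof.
rewrite /char_poly -horner_evalE -det_map_mx; congr (\det _).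
apply/matrixP => i j; rewrite !mxE.
by rewrite /= horner_evalE hornerD hornerN hornerMn hornerX hornerC.
Qed.

Lemma Pi_raw (i : 'I_9) (k l : 'I_3) : Pi C i k l = sic_vec C i k 0 * (sic_vec C i l 0)^*.
Proof. by rewrite /Pi mxE big_ord1 [X in _ * X]mxE [X in _ * X]mxE. Qed.

Lemma scaleE (c : C) (M : 'M[C]_3) (i j : 'I_3) : (c *: M) i j = c * M i j.
Proof. by rewrite mxE. Qed.

Lemma rho_herm (r : C) (n : 'I_9 -> C) (hr : r \is Num.real)
  (hn : forall i, n i \is Num.real) (k l : 'I_3) : (rho r n k l)^* = rho r n l k.
Proof.
rewrite /rho !summxE rmorph_sum /=; apply: eq_bigr => i _.
rewrite !scaleE rmorphM /= !Pi_raw rmorphM /= conjCK.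
have hc : 4 * pvec r n i - 3^-1 \is Num.real.
  rewrite /pvec; apply: rpredB; last by apply: ger0_real; rewrite invr_ge0 ler0n.
  apply: rpredM; first by apply: ger0_real; rewrite ler0n.
  apply: rpredD; first by apply: ger0_real; rewrite invr_ge0 ler0n.
  by apply: rpredM.
rewrite (CrealP hc); ring.
Qed.

Lemma eig_real (A : 'M[C]_3) (herm : forall k l, (A k l)^* = A l k) a :
  root (char_poly A) a -> a \is Num.real.
Proof.
rewrite -eigenvalue_root_char => /eigenvalueP [v hv vnz].
pose s := \sum_l v 0 l * (v 0 l)^*.
have e1 : \sum_l \sum_k v 0 k * A k l * (v 0 l)^* = a * s.
  rewrite /s mulr_sumr; apply: eq_bigr => l _.
  rewrite -mulr_suml.
  have : (v *m A) 0 l = (a *: v) 0 l by rewrite hv.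
  rewrite !mxE => ->; by rewrite mulrA.
have e2 : (\sum_l \sum_k v 0 k * A k l * (v 0 l)^*)^* =
          \sum_l \sum_k v 0 k * A k l * (v 0 l)^*.
  rewrite rmorph_sum /=; under eq_bigr => l _ do rewrite rmorph_sum /=.
  rewrite exchange_big /=; apply: eq_bigr => l _; apply: eq_bigr => k _.
  by rewrite !rmorphM /= conjCK herm; ring.
have s_ge0 : 0 <= s by rewrite /s sumr_ge0 // => l _; exact: mul_conjC_ge0.
have s_neq0 : s != 0.
  apply/negP => /eqP s0; move/negP: vnz; apply; apply/eqP/matrixP => i j.
  rewrite (ord1 i) mxE.
  have h0 := psumr_eq0P (fun l _ => mul_conjC_ge0 (v 0 l)) s0.
  have := h0 j isT.
  by move/eqP; rewrite mul_conjC_eq0 => /eqP.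
have sr : s \is Num.real by apply: ger0_real.
have asr : a * s \is Num.real by rewrite -e1; apply/CrealP; rewrite e2.
have -> : a = (a * s) / s by rewrite mulfK.
by rewrite rpredM // rpredV.
Qed.
End S2.


Definition mem3 (x a b c : nat) : bool := [|| x == a, x == b | x == c].
Definition onl (i j k a b c : nat) : bool := [&& mem3 i a b c, mem3 j a b c & mem3 k a b c].
Definition inQ' (i j k : nat) : bool :=
  [&& i != j, j != k, i != k &
   [|| onl i j k 0 1 2, onl i j k 3 4 5, onl i j k 6 7 8, onl i j k 0 3 6,
       onl i j k 1 4 7, onl i j k 2 5 8, onl i j k 0 4 8, onl i j k 1 5 6,
       onl i j k 2 3 7, onl i j k 0 5 7, onl i j k 1 3 8 | onl i j k 2 4 6]]%N.

Lemma eq_inord9 (x : 'I_9) (a : nat) : (a < 9)%N -> (x == inord a) = (val x == a).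
Proof. by move=> ha; rewrite -val_eqE /= inordK. Qed.

Lemma set3eq (i j k a b c : 'I_9) : i != j -> j != k -> i != k ->
  ([set i; j; k] == [set a; b; c]) = [&& i \in [set a; b; c], j \in [set a; b; c] & k \in [set a; b; c]].
Proof.
move=> hij hjk hik.
rewrite eqEcard !subUset !sub1set.
have -> : #|[set i; j; k]| = 3%N.
  rewrite setUC cardsU1 cards2 !inE hij.
  by rewrite eq_sym (negbTE hik) eq_sym (negbTE hjk).
have -> : (#|[set a; b; c]| <= 3)%N.
  apply: (leq_trans (leq_card_setU _ _).1); rewrite cards2 cards1.
  by case: (a != b).
by rewrite andbT andbA.
Qed.

Lemma inQE (i j k : 'I_9) : inQ i j k = inQ' i j k.
Proof.
rewrite /inQ /inQ'.
have [hij|hij] := eqVneq i j; first by rewrite hij !eqxx.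
have [hjk|hjk] := eqVneq j k; first by rewrite hjk !eqxx /= !andbF.
have [hik|hik] := eqVneq i k; first by rewrite hik !eqxx /= !andbF.
have -> : (val i != val j) by [].
have -> : (val j != val k) by [].
have -> : (val i != val k) by [].
rewrite /= /lines !inE !set3eq // !inE !eq_inord9 // /onl /mem3 /= !orbA ?orbF.
reflexivity.
Qed.

Definition t3 (i j : nat) : nat := (3 * nof (6 - mof i - mof j) + nof (6 - nof i - nof j))%N.

Lemma inQ'_all : all (fun i => all (fun j => all (fun k =>
   inQ' i j k == (i != j) && (k == t3 i j)) (iota 0 9)) (iota 0 9)) (iota 0 9).
Proof. by vm_compute. Qed.

Lemma inQ't (i j k : nat) : (i < 9)%N -> (j < 9)%N -> (k < 9)%N ->
  inQ' i j k = (i != j) && (k == t3 i j).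
Proof.
move=> hi hj hk; have /allP/(_ i) := inQ'_all; rewrite mem_iota add0n => /(_ hi).
move/allP/(_ j); rewrite mem_iota add0n => /(_ hj).
by move/allP/(_ k); rewrite mem_iota add0n => /(_ hk) /eqP.
Qed.

Lemma t3_lt (i j : nat) : (t3 i j < 9)%N.
Proof.
rewrite /t3.
have hn : forall x, (nof x < 3)%N by move=> x; rewrite /nof; do 9?case: x => [|x] //.
by have := hn (6 - mof i - mof j)%N; have := hn (6 - nof i - nof j)%N; lia.
Qed.

Section S3.
Variable C : numClosedFieldType.
Definition Fexp (v : nat -> C) : C :=
  v 0%N ^+ 3 + v 1%N ^+ 3 + v 2%N ^+ 3 + v 3%N ^+ 3 + v 4%N ^+ 3 + v 5%N ^+ 3
  + v 6%N ^+ 3 + v 7%N ^+ 3 + v 8%N ^+ 3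
  - 3 * (v 0%N * v 1%N * v 2%N + v 3%N * v 4%N * v 5%N + v 6%N * v 7%N * v 8%N
       + v 0%N * v 3%N * v 6%N + v 1%N * v 4%N * v 7%N + v 2%N * v 5%N * v 8%N
       + v 0%N * v 4%N * v 8%N + v 1%N * v 5%N * v 6%N + v 2%N * v 3%N * v 7%N
       + v 0%N * v 5%N * v 7%N + v 1%N * v 3%N * v 8%N + v 2%N * v 4%N * v 6%N).

Lemma FE (n : 'I_9 -> C) : Ffun n = Fexp (nv n).
Proof.
rewrite /Ffun.
have -> : \sum_(i < 9) \sum_(j < 9) \sum_(k < 9)
              (if inQ i j k then n i * n j * n k else 0) =
   \sum_(i < 9) \sum_(j < 9)
              (if (i != j :> nat) then nv n i * nv n j * nv n (t3 i j) else 0).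
  apply: eq_bigr => i _; apply: eq_bigr => j _.
  under eq_bigr => k _ do rewrite inQE (inQ't (ltn_ord i) (ltn_ord j) (ltn_ord k)).
  case: (i != j :> nat); last by rewrite big1.
  rewrite (bigD1 (inord (t3 i j))) //= inordK ?t3_lt // eqxx big1 ?addr0.
    by rewrite /nv !inord_val.
  move=> k hk; case: eqP => // hkt; move: hk; rewrite -hkt.
  by rewrite inord_val eqxx.
rewrite !big_ord_recr !big_ord0 /=.
rewrite !(nE n) /Fexp /t3 /mof /nof /=.
field. all: by [].
Qed.
End S3.


Section S4.
Variable C : numClosedFieldType.
Local Notation w := (omega C).

Lemma mfrho (r t : C) (n : 'I_9 -> C) (k l : nat) : (k < 3)%N -> (l < 3)%N ->
  mf (t%:M - rho r n) k l = (if k == l then t else 0) - Rv r w (nv n) k l.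
Proof.
move=> hk hl; rewrite /mf !mxE rhoE !inordK //.
have -> : (inord k == inord l :> 'I_3) = (k == l) by rewrite -val_eqE /= !inordK.
by case: (k == l); rewrite ?mulr1n ?mulr0n.
Qed.

Lemma evalD (r : C) (n : 'I_9 -> C) (a b c t : C)
  (H : char_poly (rho r n) = ('X - a%:P) * ('X - b%:P) * ('X - c%:P)) :
  (t - a) * (t - b) * (t - c) = D3 (fun k l => (if k == l then t else 0) - Rv r w (nv n) k l).
Proof.
have := congr1 (fun p => p.[t]) H.
rewrite /= char_hornerE detE !hornerM !hornerXsubC => <-.
by rewrite /D3 !mfrho.
Qed.

Lemma key_ident (r : C) (n : 'I_9 -> C) (a b c : C)
  (hsum : \sum_(i < 9) n i = 0) (hsq : \sum_(i < 9) n i ^+ 2 = 1)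
  (H : char_poly (rho r n) = ('X - a%:P) * ('X - b%:P) * ('X - c%:P)) :
  [/\ a + b + c = 1, a ^+ 2 + b ^+ 2 + c ^+ 2 - 3^-1 = 12 * r ^+ 2
    & 2 / 9 - (a ^+ 2 + b ^+ 2 + c ^+ 2) + (a ^+ 3 + b ^+ 3 + c ^+ 3) = 24 * r ^+ 3 * Ffun n].
Proof.
move: hsum hsq; rewrite !big_ord_recr !big_ord0 /= !(nE n) /= => hs hq.
have h8 : nv n 8%N = - (nv n 0%N + nv n 1%N + nv n 2%N + nv n 3%N + nv n 4%N + nv n 5%N + nv n 6%N + nv n 7%N).
  transitivity (nv n 8%N - (0 + nv n 0%N + nv n 1%N + nv n 2%N + nv n 3%N + nv n 4%N + nv n 5%N + nv n 6%N + nv n 7%N + nv n 8%N)); first by rewrite hs subr0.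
  ring.
have hq8 : 0 + nv n 0%N ^+ 2 + nv n 1%N ^+ 2 + nv n 2%N ^+ 2 + nv n 3%N ^+ 2 + nv n 4%N ^+ 2 + nv n 5%N ^+ 2 + nv n 6%N ^+ 2 + nv n 7%N ^+ 2 + (- (nv n 0%N + nv n 1%N + nv n 2%N + nv n 3%N + nv n 4%N + nv n 5%N + nv n 6%N + nv n 7%N)) ^+ 2 = 1 by move: hq; rewrite h8 => <-; ring.
have E0 := evalD 0 H; have E1 := evalD 1 H; have Em1 := evalD (-1) H.
split.
- have -> : a + b + c = - (((1 - a) * (1 - b) * (1 - c)) + ((-1 - a) * (-1 - b) * (-1 - c))) / 2
      + (0 - a) * (0 - b) * (0 - c) by field.
  rewrite E0 E1 Em1 /D3 /Rv /= h8.
  apply: (wred (q := 0)); by field.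
- have -> : a ^+ 2 + b ^+ 2 + c ^+ 2 =
    (- (((1 - a) * (1 - b) * (1 - c)) + ((-1 - a) * (-1 - b) * (-1 - c))) / 2
      + (0 - a) * (0 - b) * (0 - c)) ^+ 2
    - 2 * ((((1 - a) * (1 - b) * (1 - c)) - ((-1 - a) * (-1 - b) * (-1 - c))) / 2 - 1) by field.
  rewrite E0 E1 Em1 /D3 /Rv /= h8.
  transitivity (12 * r ^+ 2 * (0 + nv n 0%N ^+ 2 + nv n 1%N ^+ 2 + nv n 2%N ^+ 2 + nv n 3%N ^+ 2 + nv n 4%N ^+ 2 + nv n 5%N ^+ 2 + nv n 6%N ^+ 2 + nv n 7%N ^+ 2 + (- (nv n 0%N + nv n 1%N + nv n 2%N + nv n 3%N + nv n 4%N + nv n 5%N + nv n 6%N + nv n 7%N)) ^+ 2)); last by rewrite hq8 mulr1.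
  apply: (wred (q := (-32)*(nv n 7%N)^+2*(r)^+2 + (-32)*(nv n 6%N)*(nv n 7%N)*(r)^+2 + (-8)*(nv n 6%N)^+2*(r)^+2 + (-32)*(nv n 5%N)*(nv n 7%N)*(r)^+2 + (-16)*(nv n 5%N)*(nv n 6%N)*(r)^+2 + (-16)*(nv n 5%N)^+2*(r)^+2 + (-32)*(nv n 4%N)*(nv n 7%N)*(r)^+2 + (-16)*(nv n 4%N)*(nv n 6%N)*(r)^+2 + (-16)*(nv n 4%N)^+2*(r)^+2 + (-32)*(nv n 3%N)*(nv n 7%N)*(r)^+2 + (-16)*(nv n 3%N)*(nv n 6%N)*(r)^+2 + (-16)*(nv n 3%N)*(nv n 5%N)*(r)^+2 + (-16)*(nv n 3%N)*(nv n 4%N)*(r)^+2 + (-8)*(nv n 3%N)^+2*(r)^+2 + (-32)*(nv n 2%N)*(nv n 7%N)*(r)^+2 + (-16)*(nv n 2%N)*(nv n 6%N)*(r)^+2 + (-16)*(nv n 2%N)*(nv n 5%N)*(r)^+2 + (-16)*(nv n 2%N)*(nv n 4%N)*(r)^+2 + (-16)*(nv n 2%N)*(nv n 3%N)*(r)^+2 + (-16)*(nv n 2%N)^+2*(r)^+2 + (-32)*(nv n 1%N)*(nv n 7%N)*(r)^+2 + (-16)*(nv n 1%N)*(nv n 6%N)*(r)^+2 + (-16)*(nv n 1%N)*(nv n 5%N)*(r)^+2 + (-16)*(nv n 1%N)*(nv n 4%N)*(r)^+2 + (-16)*(nv n 1%N)*(nv n 3%N)*(r)^+2 + (-16)*(nv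 n 1%N)^+2*(r)^+2 + (-32)*(nv n 0%N)*(nv n 7%N)*(r)^+2 + (-16)*(nv n 0%N)*(nv n 6%N)*(r)^+2 + (-16)*(nv n 0%N)*(nv n 5%N)*(r)^+2 + (-16)*(nv n 0%N)*(nv n 4%N)*(r)^+2 + (-16)*(nv n 0%N)*(nv n 3%N)*(r)^+2 + (-16)*(nv n 0%N)*(nv n 2%N)*(r)^+2 + (-16)*(nv n 0%N)*(nv n 1%N)*(r)^+2 + (-8)*(nv n 0%N)^+2*(r)^+2)); by field.
- have -> : 2 / 9 - (a ^+ 2 + b ^+ 2 + c ^+ 2) + (a ^+ 3 + b ^+ 3 + c ^+ 3) =
      2 / 9 - ((- (((1 - a) * (1 - b) * (1 - c)) + ((-1 - a) * (-1 - b) * (-1 - c))) / 2 + ((0 - a) * (0 - b) * (0 - c))) ^+ 2 - 2 * ((((1 - a) * (1 - b) * (1 - c)) - ((-1 - a) * (-1 - b) * (-1 - c))) / 2 - 1)) + ((- (((1 - a) * (1 - b) * (1 - c)) + ((-1 - a) * (-1 - b) * (-1 - c))) / 2 + ((0 - a) * (0 - b) * (0 - c))) ^+ 3 - 3 * (- (((1 - a) * (1 - b) * (1 - c)) + ((-1 - a) * (-1 - b) * (-1 - c))) / 2 + ((0 - a) * (0 - b) * (0 - c))) * ((((1 - a) * (1 - b) * (1 - c)) - ((-1 - a) * (-1 - b) * (-1 - c))) / 2 - 1) + 3 * (- ((0 - a) * (0 - b) * (0 - c)))) by field.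
  rewrite E0 E1 Em1 /D3 /Rv /= FE /Fexp h8.
  apply: (wred (q := 96*(nv n 5%N)*(nv n 7%N)^+2*(r)^+3 + 96*(nv n 5%N)*(nv n 6%N)*(nv n 7%N)*(r)^+3 + 24*(nv n 5%N)*(nv n 6%N)^+2*(r)^+3 + 96*(nv n 5%N)^+2*(nv n 7%N)*(r)^+3 + 48*(nv n 5%N)^+2*(nv n 6%N)*(r)^+3 + 96*(nv n 4%N)*(nv n 7%N)^+2*(r)^+3 + 96*(nv n 4%N)*(nv n 6%N)*(nv n 7%N)*(r)^+3 + 24*(nv n 4%N)*(nv n 6%N)^+2*(r)^+3 + 192*(nv n 4%N)*(nv n 5%N)*(nv n 7%N)*(r)^+3 + 96*(nv n 4%N)*(nv n 5%N)*(nv n 6%N)*(r)^+3 + 96*(nv n 4%N)*(nv n 5%N)^+2*(r)^+3 + 96*(nv n 4%N)^+2*(nv n 7%N)*(r)^+3 + 48*(nv n 4%N)^+2*(nv n 6%N)*(r)^+3 + 96*(nv n 4%N)^+2*(nv n 5%N)*(r)^+3 + 96*(nv n 3%N)*(nv n 7%N)^+2*(r)^+3 + 96*(nv n 3%N)*(nv n 6%N)*(nv n 7%N)*(r)^+3 + 24*(nv n 3%N)*(nv n 6%N)^+2*(r)^+3 + 192*(nv n 3%N)*(nv n 5%N)*(nv n 7%N)*(r)^+3 + 96*(nv n 3%N)*(nv n 5%N)*(nv n 6%N)*(r)^+3 + 48*(nv n 3%N)*(nv n 5%N)^+2*(r)^+3 + 192*(nv n 3%N)*(nv n 4%N)*(nv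 n 7%N)*(r)^+3 + 96*(nv n 3%N)*(nv n 4%N)*(nv n 6%N)*(r)^+3 + 192*(nv n 3%N)*(nv n 4%N)*(nv n 5%N)*(r)^+3 + 48*(nv n 3%N)*(nv n 4%N)^+2*(r)^+3 + 96*(nv n 3%N)^+2*(nv n 7%N)*(r)^+3 + 48*(nv n 3%N)^+2*(nv n 6%N)*(r)^+3 + 72*(nv n 3%N)^+2*(nv n 5%N)*(r)^+3 + 72*(nv n 3%N)^+2*(nv n 4%N)*(r)^+3 + 24*(nv n 3%N)^+3*(r)^+3 + 96*(nv n 2%N)*(nv n 7%N)^+2*(r)^+3 + 96*(nv n 2%N)*(nv n 6%N)*(nv n 7%N)*(r)^+3 + 24*(nv n 2%N)*(nv n 6%N)^+2*(r)^+3 + 96*(nv n 2%N)*(nv n 5%N)*(nv n 7%N)*(r)^+3 + (-24)*(nv n 2%N)*(nv n 5%N)*(nv n 6%N)*(r)^+3 + 192*(nv n 2%N)*(nv n 4%N)*(nv n 7%N)*(r)^+3 + 168*(nv n 2%N)*(nv n 4%N)*(nv n 6%N)*(r)^+3 + 96*(nv n 2%N)*(nv n 4%N)*(nv n 5%N)*(r)^+3 + 96*(nv n 2%N)*(nv n 4%N)^+2*(r)^+3 + 288*(nv n 2%N)*(nv n 3%N)*(nv n 7%N)*(r)^+3 + 144*(nv n 2%N)*(nv n 3%N)*(nv n 6%N)*(r)^+3 + 120*(nv n 2%N)*(nv n 3%N)*(nv n 5%N)*(r)^+3 + 216*(nv n 2%N)*(nv n 3%N)*(nv n 4%N)*(r)^+3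 + 120*(nv n 2%N)*(nv n 3%N)^+2*(r)^+3 + 96*(nv n 2%N)^+2*(nv n 7%N)*(r)^+3 + 48*(nv n 2%N)^+2*(nv n 6%N)*(r)^+3 + 96*(nv n 2%N)^+2*(nv n 4%N)*(r)^+3 + 120*(nv n 2%N)^+2*(nv n 3%N)*(r)^+3 + 96*(nv n 1%N)*(nv n 7%N)^+2*(r)^+3 + 96*(nv n 1%N)*(nv n 6%N)*(nv n 7%N)*(r)^+3 + 24*(nv n 1%N)*(nv n 6%N)^+2*(r)^+3 + 192*(nv n 1%N)*(nv n 5%N)*(nv n 7%N)*(r)^+3 + 168*(nv n 1%N)*(nv n 5%N)*(nv n 6%N)*(r)^+3 + 96*(nv n 1%N)*(nv n 5%N)^+2*(r)^+3 + 288*(nv n 1%N)*(nv n 4%N)*(nv n 7%N)*(r)^+3 + 72*(nv n 1%N)*(nv n 4%N)*(nv n 6%N)*(r)^+3 + 192*(nv n 1%N)*(nv n 4%N)*(nv n 5%N)*(r)^+3 + 96*(nv n 1%N)*(nv n 4%N)^+2*(r)^+3 + 96*(nv n 1%N)*(nv n 3%N)*(nv n 7%N)*(r)^+3 + 48*(nv n 1%N)*(nv n 3%N)*(nv n 6%N)*(r)^+3 + 120*(nv n 1%N)*(nv n 3%N)*(nv n 5%N)*(r)^+3 + 120*(nv n 1%N)*(nv n 3%N)*(nv n 4%N)*(r)^+3 + 24*(nv n 1%N)*(nv n 3%N)^+2*(r)^+3 + 192*(nv n 1%N)*(nv n 2%N)*(nv n 7%N)*(r)^+3 + 96*(nv n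 1%N)*(nv n 2%N)*(nv n 6%N)*(r)^+3 + 96*(nv n 1%N)*(nv n 2%N)*(nv n 5%N)*(r)^+3 + 192*(nv n 1%N)*(nv n 2%N)*(nv n 4%N)*(r)^+3 + 144*(nv n 1%N)*(nv n 2%N)*(nv n 3%N)*(r)^+3 + 96*(nv n 1%N)*(nv n 2%N)^+2*(r)^+3 + 96*(nv n 1%N)^+2*(nv n 7%N)*(r)^+3 + 48*(nv n 1%N)^+2*(nv n 6%N)*(r)^+3 + 96*(nv n 1%N)^+2*(nv n 5%N)*(r)^+3 + 96*(nv n 1%N)^+2*(nv n 4%N)*(r)^+3 + 24*(nv n 1%N)^+2*(nv n 3%N)*(r)^+3 + 96*(nv n 1%N)^+2*(nv n 2%N)*(r)^+3 + 96*(nv n 0%N)*(nv n 7%N)^+2*(r)^+3 + 96*(nv n 0%N)*(nv n 6%N)*(nv n 7%N)*(r)^+3 + 24*(nv n 0%N)*(nv n 6%N)^+2*(r)^+3 + 288*(nv n 0%N)*(nv n 5%N)*(nv n 7%N)*(r)^+3 + 144*(nv n 0%N)*(nv n 5%N)*(nv n 6%N)*(r)^+3 + 120*(nv n 0%N)*(nv n 5%N)^+2*(r)^+3 + 96*(nv n 0%N)*(nv n 4%N)*(nv n 7%N)*(r)^+3 + 48*(nv n 0%N)*(nv n 4%N)*(nv n 6%N)*(r)^+3 + 144*(nv n 0%N)*(nv n 4%N)*(nv n 5%N)*(r)^+3 + 24*(nv n 0%N)*(nv n 4%N)^+2*(r)^+3 + 192*(nv n 0%N)*(nv n 3%N)*(nv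 n 7%N)*(r)^+3 + 96*(nv n 0%N)*(nv n 3%N)*(nv n 6%N)*(r)^+3 + 192*(nv n 0%N)*(nv n 3%N)*(nv n 5%N)*(r)^+3 + 96*(nv n 0%N)*(nv n 3%N)*(nv n 4%N)*(r)^+3 + 72*(nv n 0%N)*(nv n 3%N)^+2*(r)^+3 + 192*(nv n 0%N)*(nv n 2%N)*(nv n 7%N)*(r)^+3 + 96*(nv n 0%N)*(nv n 2%N)*(nv n 6%N)*(r)^+3 + 120*(nv n 0%N)*(nv n 2%N)*(nv n 5%N)*(r)^+3 + 120*(nv n 0%N)*(nv n 2%N)*(nv n 4%N)*(r)^+3 + 192*(nv n 0%N)*(nv n 2%N)*(nv n 3%N)*(r)^+3 + 48*(nv n 0%N)*(nv n 2%N)^+2*(r)^+3 + 192*(nv n 0%N)*(nv n 1%N)*(nv n 7%N)*(r)^+3 + 96*(nv n 0%N)*(nv n 1%N)*(nv n 6%N)*(r)^+3 + 216*(nv n 0%N)*(nv n 1%N)*(nv n 5%N)*(r)^+3 + 120*(nv n 0%N)*(nv n 1%N)*(nv n 4%N)*(r)^+3 + 96*(nv n 0%N)*(nv n 1%N)*(nv n 3%N)*(r)^+3 + 192*(nv n 0%N)*(nv n 1%N)*(nv n 2%N)*(r)^+3 + 48*(nv n 0%N)*(nv n 1%N)^+2*(r)^+3 + 96*(nv n 0%N)^+2*(nv n 7%N)*(r)^+3 + 48*(nv n 0%N)^+2*(nv n 6%N)*(r)^+3 + 120*(nv n 0%N)^+2*(nv n 5%N)*(r)^+3 + 24*(nv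 n 0%N)^+2*(nv n 4%N)*(r)^+3 + 72*(nv n 0%N)^+2*(nv n 3%N)*(r)^+3 + 72*(nv n 0%N)^+2*(nv n 2%N)*(r)^+3 + 72*(nv n 0%N)^+2*(nv n 1%N)*(r)^+3 + 24*(nv n 0%N)^+3*(r)^+3)); by field.
Qed.
End S4.


Section S5.
Variable C : numClosedFieldType.
Local Notation u := ((sqrtC (2 : C))^-1).

Lemma u_gt0 : 0 < u.
Proof. by rewrite invr_gt0 sqrtC_gt0 ltr0n. Qed.

Lemma u_sq : u ^+ 2 = 2^-1.
Proof. by rewrite exprVn sqrtCK. Qed.

Lemma sq_bound (F : C) : F \is Num.real -> F ^+ 2 <= 2^-1 -> - u <= F <= u.
Proof.
move=> Fr h; rewrite -real_ler_norml //.
have h1 : `|F| ^+ 2 <= u ^+ 2 by rewrite real_normK // u_sq.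
have hF : `|F| \is Num.nneg by rewrite nnegrE normr_ge0.
have hu : u \is Num.nneg by rewrite nnegrE (ltW u_gt0).
by rewrite -(ler_sqr hF hu).
Qed.

Lemma sq_eq (F v : C) : 0 < v -> 0 < F -> F ^+ 2 = v ^+ 2 -> F = v.
Proof.
move=> hv hF h.
have : (F - v) * (F + v) = 0 by rewrite -subr_sqr h subrr.
move/eqP; rewrite mulf_eq0 => /orP [/eqP/subr0_eq //|].
by move=> /eqP hz; move: (ltr_wpDl (ltW hF) hv); rewrite hz ltxx.
Qed.

Lemma cube_neg (x : C) : x \is Num.real -> (0 < - 6 * x ^+ 3) = (x < 0).
Proof.
move=> xr; rewrite mulNr oppr_gt0 pmulr_rlt0 ?ltr0n //.
by rewrite real_exprn_odd_lt0.
Qed.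

Lemma cube_pos (x : C) : x \is Num.real -> (- 6 * x ^+ 3 < 0) = (0 < x).
Proof.
move=> xr; rewrite mulNr oppr_lt0 pmulr_rgt0 ?ltr0n //.
by rewrite real_exprn_odd_gt0.
Qed.

Lemma analysis_real (F r x y z : C) : 0 < r -> x \is Num.real -> y \is Num.real ->
  z \is Num.real -> x + y + z = 0 -> x ^+ 2 + y ^+ 2 + z ^+ 2 = 12 * r ^+ 2 ->
  x ^+ 3 + y ^+ 3 + z ^+ 3 = 24 * r ^+ 3 * F ->
  [/\ F \is Num.real, F ^+ 2 <= 2^-1,
     (F = u <-> (x = y /\ x < 0) \/ (x = z /\ x < 0) \/ (y = z /\ y < 0)) &
     (F = - u <-> (x = y /\ 0 < x) \/ (x = z /\ 0 < x) \/ (y = z /\ 0 < y))].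
Proof.
move=> r0 xr yr zr hsum hS hT.
have rr : r \is Num.real by apply: gtr0_real.
have rn0 : r != 0 by rewrite gt_eqF.
have hz : z = - x - y by apply/eqP; rewrite -(subr_eq0 z) -hsum; apply/eqP; ring.
have FE : F = (x ^+ 3 + y ^+ 3 + z ^+ 3) / (24 * r ^+ 3).
  by rewrite hT; field.
have Fr : F \is Num.real.
  by rewrite FE rpredM ?rpredV ?rpredD ?rpredX ?rpredM ?rpred_nat.
pose De := (x - y) * (x - z) * (y - z).
have Der : De \is Num.real by rewrite /De !(rpredM, rpredB).
have hd : 2^-1 - F ^+ 2 = 2 * De ^+ 2 / (3456 * r ^+ 6).
  have key_ident : (12 * r ^+ 2) ^+ 3 - 6 * (24 * r ^+ 3 * F) ^+ 2 = 2 * De ^+ 2.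
    by rewrite -hS -hT /De hz; ring.
  by rewrite -key_ident; field.
have hd0 : 0 <= 2^-1 - F ^+ 2.
  have hDe2 : 0 <= De ^+ 2 by rewrite -realEsqr.
  have hr6 : 0 < r ^+ 6 by rewrite exprn_gt0.
  rewrite hd; apply: divr_ge0; first exact: mulr_ge0 (ler0n _ 2) hDe2.
  exact: mulr_ge0 (ler0n _ 3456) (ltW hr6).
have Fle : F ^+ 2 <= 2^-1 by rewrite -subr_ge0.
have eqsq : (F ^+ 2 = 2^-1) <-> (x = y \/ x = z \/ y = z).
  split.
  - move=> h; have h0 : 2 * De ^+ 2 / (3456 * r ^+ 6) = 0 by rewrite -hd h subrr.
    have hDe : De ^+ 2 = 0.
      have -> : De ^+ 2 = (2 * De ^+ 2 / (3456 * r ^+ 6)) * (3456 * r ^+ 6) / 2 by field.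
      by rewrite h0 !mul0r.
    move/eqP: hDe; rewrite expf_eq0 /= /De !mulf_eq0 !subr_eq0.
    by case/orP => [/orP [] /eqP|/eqP]; auto.
  - move=> h; apply/eqP; rewrite -subr_eq0 -oppr_eq0 opprB hd /De.
    by case: h => [->|[->|->]]; rewrite !subrr ?mulr0 ?mul0r ?expr0n ?mulr0 ?mul0r.
have Tsg : (0 < F) = (0 < x ^+ 3 + y ^+ 3 + z ^+ 3).
  by rewrite hT pmulr_rgt0 // mulr_gt0 ?ltr0n ?exprn_gt0.
have Tsg' : (F < 0) = (x ^+ 3 + y ^+ 3 + z ^+ 3 < 0).
  by rewrite hT pmulr_rlt0 // mulr_gt0 ?ltr0n ?exprn_gt0.
have cxy : x = y -> x ^+ 3 + y ^+ 3 + z ^+ 3 = - 6 * x ^+ 3.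
  by move=> e; rewrite hz -e; ring.
have cxz : x = z -> x ^+ 3 + y ^+ 3 + z ^+ 3 = - 6 * x ^+ 3.
  move=> e; have ey : y = - 2 * x.
    apply/eqP; rewrite -subr_eq0; apply/eqP.
    transitivity ((x + y + z) - (z - x)); first ring.
    by rewrite hsum -e subrr subr0.
  by rewrite -e ey; ring.
have cyz : y = z -> x ^+ 3 + y ^+ 3 + z ^+ 3 = - 6 * y ^+ 3.
  move=> e; have ex : x = - 2 * y.
    apply/eqP; rewrite -subr_eq0; apply/eqP.
    transitivity ((x + y + z) - (z - y)); first ring.
    by rewrite hsum -e subrr subr0.
  by rewrite -e ex; ring.
split => //.
- split.
  + move=> hF; have h2 : F ^+ 2 = 2^-1 by rewrite hF u_sq.
    have : 0 < F by rewrite hF u_gt0.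
    rewrite Tsg; case: (eqsq.1 h2) => [e|[e|e]].
    * by rewrite (cxy e) cube_neg // => hx; left.
    * by rewrite (cxz e) cube_neg // => hx; right; left.
    * by rewrite (cyz e) cube_neg // => hy; right; right.
  + move=> h; have h2 : F ^+ 2 = 2^-1.
      by apply/eqsq; case: h => [[e _]|[[e _]|[e _]]]; auto.
    have Fp : 0 < F.
      rewrite Tsg; case: h => [[e hx]|[[e hx]|[e hy]]].
      * by rewrite (cxy e) cube_neg.
      * by rewrite (cxz e) cube_neg.
      * by rewrite (cyz e) cube_neg.
    by apply: sq_eq u_gt0 Fp _; rewrite h2 u_sq.
- split.
  + move=> hF; have h2 : F ^+ 2 = 2^-1 by rewrite hF sqrrN u_sq.
    have : F < 0 by rewrite hF oppr_lt0 u_gt0.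
    rewrite Tsg'; case: (eqsq.1 h2) => [e|[e|e]].
    * by rewrite (cxy e) cube_pos // => hx; left.
    * by rewrite (cxz e) cube_pos // => hx; right; left.
    * by rewrite (cyz e) cube_pos // => hy; right; right.
  + move=> h; have h2 : F ^+ 2 = 2^-1.
      by apply/eqsq; case: h => [[e _]|[[e _]|[e _]]]; auto.
    have Fn : 0 < - F.
      rewrite oppr_gt0 Tsg'; case: h => [[e hx]|[[e hx]|[e hy]]].
      * by rewrite (cxy e) cube_pos.
      * by rewrite (cxz e) cube_pos.
      * by rewrite (cyz e) cube_pos.
    have -> : F = - - F by rewrite opprK.
    by congr (- _); apply: sq_eq u_gt0 Fn _; rewrite sqrrN h2 u_sq.
Qed.
End S5.


Section S6.
Variable C : numClosedFieldType.

Lemma subK_iff (p q s : C) : p - s = q - s <-> p = q.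
Proof. by split => [/addIr|->]. Qed.

Lemma tw_iff (P Q : C -> bool) (a b c s : C) : (forall t, P t = Q (t - s)) ->
  two_equal_with P a b c <->
  ((a - s = b - s /\ Q (a - s)) \/ (a - s = c - s /\ Q (a - s)) \/ (b - s = c - s /\ Q (b - s))).
Proof.
move=> hPQ; rewrite /two_equal_with; split.
- case=> [[e h]|[[e h]|[e h]]]; rewrite hPQ in h.
  + by left; rewrite e in h *.
  + by right; left; rewrite e in h *.
  + by right; right; rewrite e in h *.
- case=> [[/addIr e h]|[[/addIr e h]|[/addIr e h]]]; rewrite -hPQ in h.
  + by left.
  + by right; left.
  + by right; right.
Qed.

Lemma gen_main (n : 'I_9 -> C) (hreal : forall i, n i \is Num.real)
  (hsum : \sum_(i < 9) n i = 0) (hsq : \sum_(i < 9) n i ^+ 2 = 1) (r a b c : C) :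
  0 < r -> char_poly (rho r n) = ('X - a%:P) * ('X - b%:P) * ('X - c%:P) ->
  [/\ a + b + c = 1, a ^+ 2 + b ^+ 2 + c ^+ 2 - 3^-1 = 12 * r ^+ 2,
    2 / 9 - (a ^+ 2 + b ^+ 2 + c ^+ 2) + (a ^+ 3 + b ^+ 3 + c ^+ 3) = 24 * r ^+ 3 * Ffun n &
   [/\ Ffun n \is Num.real, Ffun n ^+ 2 <= 2^-1,
     (Ffun n = (sqrtC 2)^-1 <-> (a - 3^-1 = b - 3^-1 /\ a - 3^-1 < 0) \/ (a - 3^-1 = c - 3^-1 /\ a - 3^-1 < 0) \/ (b - 3^-1 = c - 3^-1 /\ b - 3^-1 < 0)) &
     (Ffun n = - (sqrtC 2)^-1 <-> (a - 3^-1 = b - 3^-1 /\ 0 < a - 3^-1) \/ (a - 3^-1 = c - 3^-1 /\ 0 < a - 3^-1) \/ (b - 3^-1 = c - 3^-1 /\ 0 < b - 3^-1))]].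
Proof.
move=> r0 H.
have [h1 hS hT] := key_ident hsum hsq H.
have rr : r \is Num.real by apply: gtr0_real.
have herm := rho_herm rr hreal.
have ar : a \is Num.real.
  by apply: (eig_real herm); rewrite H /root !hornerM !hornerXsubC subrr ?mulr0 ?mul0r.
have br : b \is Num.real.
  by apply: (eig_real herm); rewrite H /root !hornerM !hornerXsubC subrr ?mulr0 ?mul0r.
have cr : c \is Num.real.
  by apply: (eig_real herm); rewrite H /root !hornerM !hornerXsubC subrr ?mulr0 ?mul0r.
have tr : (3^-1 : C) \is Num.real by apply: ger0_real; rewrite invr_ge0 ler0n.
split => //.
apply: analysis_real r0 _ _ _ _ _ _.
- by rewrite rpredB.
- by rewrite rpredB.
- by rewrite rpredB.
- by rewrite (_ : a - 3^-1 + (b - 3^-1) + (c - 3^-1) = (a + b + c) - 1); [rewrite h1 subrr | field].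
- rewrite -hS (_ : (a - 3^-1) ^+ 2 + (b - 3^-1) ^+ 2 + (c - 3^-1) ^+ 2 =
     a ^+ 2 + b ^+ 2 + c ^+ 2 - 3^-1 - 2 / 3 * ((a + b + c) - 1)); last by field.
  by rewrite h1 subrr mulr0 subr0.
- rewrite -hT (_ : (a - 3^-1) ^+ 3 + (b - 3^-1) ^+ 3 + (c - 3^-1) ^+ 3 =
     2 / 9 - (a ^+ 2 + b ^+ 2 + c ^+ 2) + (a ^+ 3 + b ^+ 3 + c ^+ 3) + ((a + b + c) - 1) / 3); last by field.
  by rewrite h1 subrr mul0r addr0.
Qed.

End S6.

Theorem mainTheorem8 (C : numClosedFieldType) (n : 'I_9 -> C)
  (hreal : forall i, n i \is Num.real)
  (hsum : \sum_(i < 9) n i = 0)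
  (hsq : \sum_(i < 9) n i ^+ 2 = 1) :
  (- (sqrtC 2)^-1 <= Ffun n /\ Ffun n <= (sqrtC 2)^-1) /\
  (forall (r a b : C), 0 < r ->
     char_poly (rho r n) = ('X - a%:P) * ('X - b%:P) * ('X - (1 - a - b)%:P) ->
     [/\ Ffun n = sqrtC 3 * (2 / 9 - f1 a b + f2 a b) / (sqrtC (f1 a b - 3^-1)) ^+ 3,
         Ffun n = (sqrtC 2)^-1 <-> two_equal_with (fun x => x < 3^-1) a b (1 - a - b)
       & Ffun n = - (sqrtC 2)^-1 <-> two_equal_with (fun x => x > 3^-1) a b (1 - a - b)]).
Proof.
split.
- have [rs Hrs] := closed_field_poly_normal (char_poly (rho 1 n)).
  have hl : lead_coef (char_poly (rho 1 n)) = 1 by apply/monicP; exact: char_poly_monic.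
  rewrite hl scale1r in Hrs.
  have hsz : size rs = 3%N.
    have := size_char_poly (rho 1 n); rewrite Hrs size_prod_XsubC.
    by case.
  move: Hrs hsz; case: rs => [|a [|b [|c [|? ?]]]] //= Hrs _.
  rewrite !big_cons big_nil mulr1 mulrA in Hrs.
  have [_ _ _ [Fr Fle _ _]] := gen_main hreal hsum hsq ltr01 Hrs.
  by apply/andP; apply: sq_bound.
- move=> r a b r0 H.
  have [h1 hS hT [Fr Fle hu hmu]] := gen_main hreal hsum hsq r0 H.
  split.
  + rewrite /f1 /f2 hS hT.
    have s3 : sqrtC (3 : C) ^+ 2 = 3 by rewrite sqrtCK.
    have s0 : sqrtC (3 : C) != 0 by rewrite sqrtC_eq0 pnatr_eq0.
    have rn0 : r != 0 by rewrite gt_eqF.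
    have -> : sqrtC (12 * r ^+ 2) = 2 * sqrtC 3 * r.
      have -> : 12 * r ^+ 2 = (2 * sqrtC 3 * r) ^+ 2 by rewrite !exprMn s3; ring.
      by rewrite sqrCK // mulr_ge0 ?(ltW r0) // mulr_ge0 ?ler0n // sqrtC_ge0 ler0n.
    have -> : (2 * sqrtC 3 * r) ^+ 3 = 8 * sqrtC 3 * sqrtC 3 ^+ 2 * r ^+ 3 by ring.
    rewrite s3; field.
    by rewrite s0 rn0.
  + apply: (iff_trans hu); apply: iff_sym.
    apply: (@tw_iff C (fun x => x < 3^-1) (fun t => t < 0) a b (1 - a - b) 3^-1).
    by move=> t; rewrite subr_lt0.
  + apply: (iff_trans hmu); apply: iff_sym.
    apply: (@tw_iff C (fun x => x > 3^-1) (fun t => 0 < t) a b (1 - a - b) 3^-1).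
    by move=> t; rewrite subr_gt0.
Qed.
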